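(* Let $z\in\mathbb R^d$ satisfy $\|z\|_2=1$ and $\|z\|_\infty\le\mu/\sqrt d$, and let $M=zz^\top$. There are a polynomial $P$ and absolute constants $c_0,C>0$ such that if $0<\epsilon\le c_0$ and $p\ge P(\mu,\log d)/(d\epsilon^2)$ (with $p\le1$), then with probability $1-o(1)$ as $d\to\infty$ over $\Omega$, every local minimum $x$ of $f(x)=\frac12\|P_\Omega(M-xx^\top)\|_F^2$ that lies in $\mathcal B=\{x\in\mathbb R^d:\|x\|_\infty<2\mu/\sqrt d\}$ satisfies $\min(\|x-z\|_2,\|x+z\|_2)\le C\sqrt\epsilon$.
   Context: The random set $\Omega\subseteq[d]\times[d]$ is generated as follows: independently for each unordered pair $\{i,j\}$ (including $i=j$), with probability $p$ both $(i,j)$ and $(j,i)$ are placed in $\Omega$, otherwise neither. $P_\Omega(A)$ is the matrix agreeing with $A$ on entries in $\Omega$ and zero elsewhere; $\|\cdot\|_F$ is the Frobenius norm. *)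

(* Defs.v *)
From HB Require Import structures.
From mathcomp Require Import all_boot all_order all_algebra.
From mathcomp Require Import all_classical all_reals all_analysis.
Set Implicit Arguments. Unset Strict Implicit. Unset Printing Implicit Defensive.
Import Order.TTheory GRing.Theory Num.Theory.
Local Open Scope ring_scope.

Section Defs.
Variables (R : realType) (d : nat).

(* index pairs {i,j} encoded by (i,j) with i <= j (diagonal included) *)
Definition upper : {set 'I_d * 'I_d} := [set ij : 'I_d * 'I_d | (nat_of_ord ij.1 <= nat_of_ord ij.2)%N].

(* Omega generated from the set S of selected unordered pairs: both (i,j) and (j,i) *)
Definition omega_of (S : {set 'I_d * 'I_d}) : {set 'I_d * 'I_d} :=
  [set ij : 'I_d * 'I_d | ((ij.1, ij.2) \in S) || ((ij.2, ij.1) \in S)].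

(* probability of selecting exactly S, each unordered pair independently w.p. p *)
Definition weight (p : R) (S : {set 'I_d * 'I_d}) : R :=
  \prod_(ij in upper) (if ij \in S then p else 1 - p).

(* probability that the random Omega satisfies the event E *)
Definition prob (p : R) (E : {set 'I_d * 'I_d} -> Prop) : R :=
  \sum_(S : {set 'I_d * 'I_d} | S \subset upper)
     weight p S * (if `[< E S >] then 1 else 0).

Definition P_Omega (Om : {set 'I_d * 'I_d}) (A : 'M[R]_d) : 'M[R]_d :=
  \matrix_(i, j) (if (i, j) \in Om then A i j else 0).

Definition normF (A : 'M[R]_d) : R := Num.sqrt (\sum_i \sum_j (A i j) ^+ 2).

Definition norm2 (x : 'cV[R]_d) : R := Num.sqrt (\sum_i (x i 0) ^+ 2).

Definition normInf (x : 'cV[R]_d) : R := \big[Num.max/0]_i `|x i 0|.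

Definition fobj (Om : {set 'I_d * 'I_d}) (M : 'M[R]_d) (x : 'cV[R]_d) : R :=
  2^-1 * (normF (P_Omega Om (M - x *m x^T))) ^+ 2.

Definition local_min (g : 'cV[R]_d -> R) (x : 'cV[R]_d) : Prop :=
  exists r : R, 0 < r /\ forall y, norm2 (y - x) < r -> g x <= g y.

End Defs.

Definition peval2 (R : realType) (P : {poly {poly R}}) (a b : R) : R :=
  (P.[b%:P]).[a].

(* Main.v *)
Require Import Defs.
From HB Require Import structures.
From mathcomp Require Import all_boot all_order all_algebra.
From mathcomp Require Import all_classical all_reals all_analysis.
From mathcomp Require Import ring lra.
Import Order.TTheory GRing.Theory Num.Theory.
Local Open Scope ring_scope.
Unset Implicit Arguments. Set Strict Implicit.

Lemma sum_subset_prod (T : finType) (R : comNzRingType) (U : {set T}) (F : T -> bool -> R) :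
  \sum_(S : {set T} | S \subset U) \prod_(e in U) F e (e \in S) =
  \prod_(e in U) (F e true + F e false).
Proof.
pose G e b := if e \in U then F e b else (if b then 0 else 1 : R).
have -> : \prod_(e in U) (F e true + F e false) = \prod_e \sum_(b : bool) G e b.
  rewrite big_mkcond /=; apply: eq_bigr => e _.
  by rewrite big_bool /G; case: (e \in U) => //=; rewrite add0r.
rewrite bigA_distr_bigA /=.
rewrite (reindex (fun S : {set T} => [ffun e => e \in S])) /=; last first.
  exists (fun f : {ffun T -> bool} => [set e | f e]) => [S _|f _].
    by apply/setP => e; rewrite inE ffunE.
  by apply/ffunP => e; rewrite ffunE inE.
rewrite [RHS](bigID (fun S : {set T} => S \subset U)) /=.
rewrite [X in _ = _ + X]big1 ?addr0; last first.
  move=> S /subsetPn [e eS eU].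
  rewrite (bigD1 e) //= ffunE /G (negbTE eU) eS mul0r //.
apply: eq_bigr => S SU.
rewrite [LHS]big_mkcond /=; apply: eq_bigr => e _.
rewrite ffunE /G; case eU: (e \in U) => //.
by case eS: (e \in S) => //; move/fintype.subsetP: SU => /(_ e eS); rewrite eU.
Qed.

Unset Implicit Arguments. Set Strict Implicit.

Section S.
Variable R : realType.

Lemma expR_quad (y : R) : `|y| <= 1/2 -> expR y - 1 - y <= 2 * y^+2.
Proof.
move=> hy.
have hy1 : -(1/2) <= y <= 1/2 by rewrite -ler_norml.
case/andP: hy1 => h1 h2.
have h3 : 1 - y <= expR (- y) by have := expR_ge1Dx (- y); rewrite addrC.
have hpos : 0 < 1 - y by lra.
have : expR y <= (1 - y)^-1.
  have e : expR y = (expR (- y))^-1 by rewrite expRN invrK.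
  by rewrite e lef_pV2 // posrE ?expR_gt0.
move=> h4.
have h5 : (1 - y)^-1 <= 1 + y + 2 * y^+2.
  have hq : 1 <= (1 - y) * (1 + y + 2 * y^+2) by nra.
  apply: (le_trans (y := (1 - y)^-1 * ((1 - y) * (1 + y + 2 * y^+2)))).
    by rewrite -{1}[(1 - y)^-1]mulr1 ler_wpM2l // invr_ge0 ltW.
  by rewrite mulrA mulVf ?mul1r // gt_eqF.
lra.
Qed.

Lemma mgf1 (p y : R) : 0 <= p -> p <= 1 -> `|y| <= 1/2 ->
  p * expR (y * (1 - p)) + (1 - p) * expR (- (y * p)) <= expR (2 * p * y^+2).
Proof.
move=> p0 p1 hy.
have -> : p * expR (y * (1 - p)) + (1 - p) * expR (- (y * p)) =
          expR (- (y * p)) * (1 + p * (expR y - 1)).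
  rewrite mulrBr mulr1 expRD; ring.
apply: (le_trans (y := expR (- (y * p)) * expR (p * (expR y - 1)))).
  by rewrite ler_wpM2l ?expR_ge0 // expR_ge1Dx.
rewrite -expRD ler_expR.
have := @expR_quad y hy. nra.
Qed.
End S.

Unset Implicit Arguments. Set Strict Implicit.

Lemma mgf_bound (R : realType) (T : finType) (U : {set T}) (c : T -> R) (th p : R) :
  0 <= p -> p <= 1 -> (forall e, `|th * c e| <= 1/2) ->
  \sum_(S : {set T} | S \subset U)
     (\prod_(e in U) (if e \in S then p else 1 - p)) *
     expR (th * \sum_(e in U) c e * ((e \in S)%:R - p))
  <= expR (2 * p * \sum_(e in U) (th * c e)^+2).
Proof.
move=> p0 p1 hc.
have -> : \sum_(S : {set T} | S \subset U)
     (\prod_(e in U) (if e \in S then p else 1 - p)) *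
     expR (th * \sum_(e in U) c e * ((e \in S)%:R - p)) =
  \sum_(S : {set T} | S \subset U) \prod_(e in U)
     ((if e \in S then p else 1 - p) * expR (th * c e * ((e \in S)%:R - p))).
  apply: eq_bigr => S _.
  rewrite big_split /=; congr (_ * _).
  rewrite mulr_sumr expR_sum; apply: eq_bigr => e _; by rewrite mulrA.
rewrite (@sum_subset_prod _ _ U (fun e b => (if b then p else 1 - p) * expR (th * c e * (b%:R - p)))).
rewrite mulr_sumr expR_sum; apply: ler_prod => e _.
apply/andP; split.
  by rewrite addr_ge0 // mulr_ge0 ?expR_ge0 // subr_ge0.
have := @mgf1 R p (th * c e) p0 p1 (hc e).
by rewrite /= sub0r mulrN.
Qed.

Unset Implicit Arguments. Set Strict Implicit.

Lemma sum_upper (R : realType) (d : nat) (G : 'I_d -> 'I_d -> R) :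
  \sum_i \sum_j G i j =
  \sum_(e in upper d) (G e.1 e.2 + (e.1 != e.2)%:R * G e.2 e.1).
Proof.
rewrite pair_bigA /= (bigID (fun e : 'I_d * 'I_d => (e.1 <= e.2)%N)) /=.
rewrite big_split /=; congr (_ + _).
  by apply: eq_bigl => e; rewrite /upper inE.
rewrite (reindex (fun e : 'I_d * 'I_d => (e.2, e.1))) /=; last first.
  by exists (fun e : 'I_d * 'I_d => (e.2, e.1)) => [[a b]|[a b]].
rewrite [RHS]big_mkcond [LHS]big_mkcond /=; apply: eq_bigr => e _.
rewrite /upper inE -ltnNge ltn_neqAle.
case: (e.1 <= e.2)%N; rewrite ?andbF ?andbT //=.
by case: (nat_of_ord e.1 != e.2) => /=; rewrite ?mul1r ?mul0r.
Qed.

Set Implicit Arguments. Unset Strict Implicit.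

Section Prob.
Variables (R : realType) (d : nat).

Definition sg (b : bool) : R := if b then 1 else -1.
Definition om (S : {set 'I_d * 'I_d}) (i j : 'I_d) : R := ((i, j) \in omega_of S)%:R.
Definition Xst (p : R) S (s t : {ffun 'I_d -> bool}) : R :=
  \sum_i \sum_j (om S i j - p) * (sg (s i) * sg (t j)).
Definition cst (s t : {ffun 'I_d -> bool}) (e : 'I_d * 'I_d) : R :=
  sg (s e.1) * sg (t e.2) + (e.1 != e.2)%:R * (sg (s e.2) * sg (t e.1)).

Lemma om_sym (S : {set 'I_d * 'I_d}) i j : om S i j = om S j i.
Proof. by rewrite /om /omega_of !inE orbC. Qed.

Lemma om_upper (S : {set 'I_d * 'I_d}) e : S \subset upper d -> e \in upper d -> om S e.1 e.2 = (e \in S)%:R.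
Proof.
move=> SU; case: e => a b; rewrite /upper inE /= => hab.
rewrite /om /omega_of inE /=.
case hS: ((a, b) \in S) => //=.
case hS2: ((b, a) \in S) => //.
move/fintype.subsetP: SU => /(_ _ hS2); rewrite inE /= => hba.
have eab : a = b by apply: ord_inj; apply/eqP; rewrite eqn_leq hab hba.
by move: hS hS2; rewrite eab => ->.
Qed.

Lemma Xst_upper p (S : {set 'I_d * 'I_d}) s t : S \subset upper d ->
  Xst p S s t = \sum_(e in upper d) cst s t e * ((e \in S)%:R - p).
Proof.
move=> SU; rewrite /Xst sum_upper; apply: eq_bigr => e eU.
rewrite (om_sym S e.2 e.1) om_upper // /cst; ring.
Qed.

Lemma sg_norm b : `|sg b| = 1.
Proof. by case: b; rewrite /sg ?normrN normr1. Qed.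

Lemma cst_bound s t e : `|cst s t e| <= 2.
Proof.
rewrite /cst; apply: (le_trans (ler_normD _ _)).
rewrite !normrM !sg_norm !mulr1.
have : `|((e.1 != e.2)%:R : R)| <= 1 by case: (e.1 != e.2); rewrite ?normr1 ?normr0.
lra.
Qed.

Lemma card_upper : (#|upper d| <= d * d)%N.
Proof.
by apply: (leq_trans (max_card _)); rewrite card_prod card_ord.
Qed.

Lemma tail (c : 'I_d * 'I_d -> R) (p q : R) :
  (forall e, `|c e| <= 2) -> 0 <= p -> p <= 1 -> 4 <= q -> q ^+ 2 = p * d%:R ->
  \sum_(S : {set 'I_d * 'I_d} | S \subset upper d) weight p S *
     expR (q^-1 * (\sum_(e in upper d) c e * ((e \in S)%:R - p) - 16 * d%:R * q))
  <= expR (- (8 * d%:R)).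
Proof.
move=> hc p0 p1 q4 hq.
have q0 : 0 < q by lra.
have -> : - (8 * d%:R) = - (16 * d%:R) + 8 * d%:R :> R by ring.
rewrite expRD.
have E : forall A : {set 'I_d * 'I_d}, expR (q^-1 * (\sum_(e in upper d) c e * ((e \in A)%:R - p) - 16 * d%:R * q)) =
  expR (- (16 * d%:R)) * expR (q^-1 * \sum_(e in upper d) c e * ((e \in A)%:R - p)).
  move=> A; rewrite -expRD; congr expR.
  by field; rewrite gt_eqF.
under eq_bigr => S _ do rewrite E mulrCA.
rewrite -mulr_sumr ler_wpM2l ?expR_ge0 //.
rewrite /weight.
apply: le_trans (@mgf_bound R _ (upper d) c q^-1 p p0 p1 _) _.
  move=> e; have qi : 0 < q^-1 by rewrite invr_gt0.
  rewrite normrM (gtr0_norm qi).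
  have := hc e; have : q^-1 <= 1/4.
    by rewrite -[1/4]invrK lef_pV2 ?posrE // ?invrK; lra.
  have := normr_ge0 (c e); nra.
rewrite ler_expR.
have hs : \sum_(e in upper d) (q^-1 * c e) ^+ 2 <= (d * d)%:R * (4 * q^-2).
  apply: le_trans (_ : \sum_(e in upper d) 4 * q^-2 <= _).
    apply: ler_sum => e _; rewrite exprMn.
    have : (c e)^+2 <= 4.
      have h := hc e; have h0 := normr_ge0 (c e).
      have : (c e)^+2 = `|c e|^+2 by rewrite real_normK // num_real.
      nra.
    move=> h; have h3 : 0 <= q^-2 :> R by rewrite invr_ge0 exprn_ge0 // ltW.
    rewrite exprVn; nra.
  rewrite sumr_const -mulr_natl.
  have h2 : (#|upper d|%:R : R) <= (d * d)%:R by rewrite ler_nat card_upper.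
  have h3 : 0 <= 4 * q^-2 :> R by rewrite mulr_ge0 // invr_ge0 exprn_ge0 // ltW.
  nra.
have pd : 0 < p * d%:R by rewrite -hq exprn_gt0.
have dpos : 0 < (d%:R : R) by have := ler0n R d; nra.
have p0' : 0 < p by nra.
have e2 : 2 * p * ((d * d)%:R * (4 * q^-2)) = 8 * d%:R.
  rewrite hq natrM; field.
  by rewrite gt_eqF // gt_eqF.
rewrite -e2; apply: ler_wpM2l => //; lra.
Qed.
End Prob.

Set Implicit Arguments. Unset Strict Implicit.

Section Union.
Variables (R : realType) (d : nat).
Local Notation FB := {ffun 'I_d -> bool}.

Definition goodb (p q : R) (S : {set 'I_d * 'I_d}) : bool :=
  [forall st : FB * FB, `|Xst p S st.1 st.2| <= 16 * d%:R * q].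

Definition Eb (p q : R) (S : {set 'I_d * 'I_d}) (st : FB * FB) : R :=
  expR (q^-1 * (Xst p S st.1 st.2 - 16 * d%:R * q)) +
  expR (q^-1 * (- Xst p S st.1 st.2 - 16 * d%:R * q)).

Lemma weight_ge0 (p : R) (S : {set 'I_d * 'I_d}) : 0 <= p -> p <= 1 -> 0 <= weight p S.
Proof.
move=> p0 p1; rewrite /weight; apply: prodr_ge0 => e _.
by case: (e \in S); lra.
Qed.

Lemma weight_sum (p : R) :
  \sum_(S : {set 'I_d * 'I_d} | S \subset upper d) weight p S = 1.
Proof.
rewrite /weight (@sum_subset_prod _ _ (upper d) (fun e b => if b then p else 1 - p)).
by apply: big1 => e _; rewrite addrC subrK.
Qed.

Lemma good_ind (p q : R) (S : {set 'I_d * 'I_d}) : 0 < q ->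
  1 - \sum_(st : FB * FB) Eb p q S st <= (goodb p q S)%:R.
Proof.
move=> q0.
have Eb0 : forall st, 0 <= Eb p q S st by move=> st; rewrite addr_ge0 ?expR_ge0.
case g: (goodb p q S).
  by rewrite lerBlDr lerDl sumr_ge0.
move/negbT: g; rewrite /goodb negb_forall => /existsP [st hst].
rewrite (bigD1 st) //=.
have hsum : 0 <= \sum_(i | i != st) Eb p q S i by apply: sumr_ge0 => i _.
suff : 1 <= Eb p q S st by lra.
rewrite -ltNge in hst.
have qi : 0 < q^-1 by rewrite invr_gt0.
rewrite /Eb; move: hst; set X := Xst p S st.1 st.2; set L := 16 * d%:R * q => hst.
have e1 := expR_ge0 (q^-1 * (X - L)); have e2 := expR_ge0 (q^-1 * (- X - L)).
have [hX|hX] : L < X \/ L < - X.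
  by case: (lerP 0 X) => h; [left; rewrite -(ger0_norm h) | right; rewrite -(ltr0_norm h)].
  have := expR_ge1Dx (q^-1 * (X - L)).
  have : 0 <= q^-1 * (X - L) by rewrite mulr_ge0 ?ltW // subr_gt0.
  lra.
have := expR_ge1Dx (q^-1 * (- X - L)).
have : 0 <= q^-1 * (- X - L) by rewrite mulr_ge0 ?ltW // subr_gt0.
lra.
Qed.

Lemma union_bound (p q : R) : 0 <= p -> p <= 1 -> 4 <= q -> q ^+ 2 = p * d%:R ->
  1 - 2 * (2 ^ d * 2 ^ d)%:R * expR (- (8 * d%:R))
  <= \sum_(S : {set 'I_d * 'I_d} | S \subset upper d) weight p S * (goodb p q S)%:R.
Proof.
move=> p0 p1 q4 hq.
have q0 : 0 < q by lra.
apply: le_trans (_ : \sum_(S : {set 'I_d * 'I_d} | S \subset upper d)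
   weight p S * (1 - \sum_(st : FB * FB) Eb p q S st) <= _); last first.
  by apply: ler_sum => S _; rewrite ler_wpM2l ?weight_ge0 ?good_ind.
under eq_bigr => S _ do rewrite mulrBr mulr1 mulr_sumr.
rewrite sumrB weight_sum exchange_big /=.
rewrite lerD2l lerN2.
have -> : (2 * (2 ^ d * 2 ^ d)%:R * expR (- (8 * d%:R)) : R) =
   \sum_(st : FB * FB) 2 * expR (- (8 * d%:R)).
  rewrite sumr_const card_prod card_ffun !card_bool card_ord -mulr_natl; ring.
apply: ler_sum => st _.
under eq_bigr => S _ do rewrite /Eb mulrDr.
rewrite big_split /=.
have -> : 2 * expR (- (8 * d%:R)) = expR (- (8 * d%:R)) + expR (- (8 * d%:R)) :> R by ring.
apply: lerD.
  rewrite (eq_bigr (fun S => weight p S * expR (q^-1 * (\sum_(e in upper d) @cst R d st.1 st.2 e * ((e \in S)%:R - p) - 16 * d%:R * q)))); last first.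
    by move=> S SU; rewrite Xst_upper.
  apply: tail => //; exact: cst_bound.
rewrite (eq_bigr (fun S => weight p S * expR (q^-1 * (\sum_(e in upper d) (- @cst R d st.1 st.2 e) * ((e \in S)%:R - p) - 16 * d%:R * q)))); last first.
  move=> S SU; rewrite Xst_upper // -sumrN; do 2 f_equal.
  congr (_ * (_ - _)); apply: eq_bigr => e _; by rewrite mulNr.
apply: tail => // e; rewrite normrN; exact: cst_bound.
Qed.
End Union.

Set Implicit Arguments. Unset Strict Implicit.

Section Bilin.
Variables (R : realType) (d : nat).
Local Notation FB := {ffun 'I_d -> bool}.

Lemma sg_abs (b : bool) (x : R) : (0 <= x) = b -> sg R b * x = `|x|.
Proof.
move=> <-; rewrite /sg; case: lerP => h; first by rewrite mul1r ger0_norm.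
by rewrite ltr0_norm // mulN1r.
Qed.

Lemma bilin_up (p L m1 m2 : R) (S : {set 'I_d * 'I_d}) (u w : 'I_d -> R) :
  (forall s t : FB, `|Xst p S s t| <= L) -> 0 <= m1 -> 0 <= m2 ->
  (forall i, `|u i| <= m1) -> (forall j, `|w j| <= m2) ->
  \sum_i \sum_j (om R S i j - p) * (u i * w j) <= L * m1 * m2.
Proof.
move=> hX m10 m20 hu hw.
pose r i := \sum_j (om R S i j - p) * w j.
have e1 : \sum_i \sum_j (om R S i j - p) * (u i * w j) = \sum_i u i * r i.
  apply: eq_bigr => i _; rewrite /r mulr_sumr; apply: eq_bigr => j _; ring.
rewrite e1.
pose s : FB := [ffun i => 0 <= r i].
apply: le_trans (_ : \sum_i m1 * (sg R (s i) * r i) <= _).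
  apply: ler_sum => i _; rewrite (@sg_abs (s i)) ?ffunE //.
  apply: le_trans (ler_norm _) _; rewrite normrM ler_wpM2r //.
rewrite -mulr_sumr.
pose k j := \sum_i (om R S i j - p) * sg R (s i).
have e2 : \sum_i sg R (s i) * r i = \sum_j w j * k j.
  rewrite /r /k; under eq_bigr => i _ do rewrite mulr_sumr.
  rewrite exchange_big /=; apply: eq_bigr => j _; rewrite mulr_sumr.
  apply: eq_bigr => i _; ring.
rewrite e2.
pose t : FB := [ffun j => 0 <= k j].
have e3 : \sum_j sg R (t j) * k j = Xst p S s t.
  rewrite /Xst /k; under eq_bigr => j _ do rewrite mulr_sumr.
  rewrite exchange_big /=; apply: eq_bigr => i _; apply: eq_bigr => j _; ring.
have h4 : \sum_j w j * k j <= m2 * Xst p S s t.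
  rewrite -e3 mulr_sumr; apply: ler_sum => j _.
  rewrite (@sg_abs (t j)) ?ffunE //.
  apply: le_trans (ler_norm _) _; rewrite normrM ler_wpM2r //.
have h5 : Xst p S s t <= L by apply: le_trans (ler_norm _) (hX s t).
have : m2 * Xst p S s t <= m2 * L by rewrite ler_wpM2l.
have : m1 * (\sum_j w j * k j) <= m1 * (m2 * Xst p S s t) by rewrite ler_wpM2l.
have : 0 <= m1 * m2 by rewrite mulr_ge0.
nra.
Qed.

Lemma bilin (p L m1 m2 : R) (S : {set 'I_d * 'I_d}) (u w : 'I_d -> R) :
  (forall s t : FB, `|Xst p S s t| <= L) -> 0 <= m1 -> 0 <= m2 ->
  (forall i, `|u i| <= m1) -> (forall j, `|w j| <= m2) ->
  `|\sum_i \sum_j (om R S i j - p) * (u i * w j)| <= L * m1 * m2.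
Proof.
move=> hX m10 m20 hu hw; rewrite ler_norml; apply/andP; split.
  rewrite lerNl -sumrN.
  have := @bilin_up p L m1 m2 S (fun i => - u i) w hX m10 m20 _ hw.
  rewrite (_ : \sum_i _ = \sum_i - \sum_j (om R S i j - p) * (u i * w j)).
    by apply; move=> i; rewrite normrN.
  apply: eq_bigr => i _; rewrite -sumrN; apply: eq_bigr => j _; ring.
exact: bilin_up.
Qed.
End Bilin.

Set Implicit Arguments. Unset Strict Implicit.

Section Poly.
Variable R : realType.

Lemma small_ge0 (x B t0 : R) : 0 < t0 -> 0 <= B ->
  (forall t, 0 < t -> t <= t0 -> - (t * B) <= x) -> 0 <= x.
Proof.
move=> t00 B0 h; rewrite leNgt; apply/negP => x0.
case: (ltrP (t0 * B) (- x)) => hB.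
  have := h t0 t00 (lexx _); lra.
have Bn : B != 0.
  apply/negP => /eqP eB; move: hB; rewrite eB mulr0; lra.
have Bp : 0 < B by rewrite lt_def Bn.
have := h ((- x) / (2 * B)).
have e : (- x) / (2 * B) * B = - x / 2 by field.
rewrite e.
have h1 : 0 < (- x) / (2 * B) by rewrite divr_gt0 //; lra.
have h2 : (- x) / (2 * B) <= t0.
  rewrite ler_pdivrMr; last lra.
  have : 0 <= t0 * B by rewrite mulr_ge0 // ltW.
  lra.
move=> /(_ h1 h2); lra.
Qed.

Lemma le_eq (x y : R) : x = y -> x <= y. Proof. by move->. Qed.

Lemma pow_le (t : R) (n : nat) : 0 <= t -> t <= 1 -> t ^+ n.+1 <= t.
Proof.
move=> t0 t1; rewrite exprSr.
have := exprn_ile1 n t0 t1.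
move=> h; have := ler_wpM2r t0 h; rewrite mul1r; exact.
Qed.

Lemma poly4 (a1 a2 a3 a4 r0 : R) : 0 < r0 ->
  (forall t, `|t| < r0 -> 0 <= t * a1 + t^+2 * a2 + t^+3 * a3 + t^+4 * a4) ->
  a1 = 0 /\ 0 <= a2.
Proof.
move=> r00 h.
have [t0 [t00 [t0r t01]]] : exists t0, 0 < t0 /\ t0 < r0 /\ t0 <= 1.
  case: (lerP r0 1) => hr.
    by exists (r0 / 2); split; [|split]; lra.
  by exists (1/2); split; [|split]; lra.
have hp : forall t, 0 < t -> t <= t0 ->
  0 <= t * (a1 + t * a2 + t^+2 * a3 + t^+3 * a4) /\
  0 <= t * (- a1 + t * a2 - t^+2 * a3 + t^+3 * a4).
  move=> t tp tt0; split.
    have := h t; rewrite gtr0_norm // => /(_ ltac:(lra)).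
    by rewrite !exprS !expr0 !mulr1; move/le_trans; apply; apply: le_eq; ring.
  have := h (- t); rewrite normrN gtr0_norm // => /(_ ltac:(lra)).
  by rewrite !exprS !expr0 !mulr1; move/le_trans; apply; apply: le_eq; ring.
have B0 : 0 <= `|a2| + `|a3| + `|a4| by rewrite !addr_ge0.
have n2 := normr_ge0 a2; have n3 := normr_ge0 a3; have n4 := normr_ge0 a4.
have bnd : forall (t a : R) n, 0 < t -> t <= 1 ->
    t ^+ n.+1 * a <= t * `|a| /\ - (t * `|a|) <= t ^+ n.+1 * a.
  move=> t a n tp t1.
  have hpw := pow_le n (ltW tp) t1.
  have hn : 0 <= t ^+ n.+1 by rewrite exprn_ge0 // ltW.
  have q1 : t ^+ n.+1 * a <= t ^+ n.+1 * `|a| by rewrite ler_wpM2l // ler_norm.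
  have q2 : t ^+ n.+1 * (- a) <= t ^+ n.+1 * `|a| by rewrite ler_wpM2l // -normrN ler_norm.
  have q3 : t ^+ n.+1 * `|a| <= t * `|a| by rewrite ler_wpM2r // normr_ge0.
  rewrite mulrN in q2; split; lra.
have A1p : 0 <= a1.
  apply: (small_ge0 t00 B0) => t tp tt0.
  have [ha _] := hp t tp tt0.
  move: ha; rewrite pmulr_rge0 // => hb.
  have t1 : t <= 1 by lra.
  have [b2 _] := bnd t a2 0%N tp t1.
  have [b3 _] := bnd t a3 1%N tp t1.
  have [b4 _] := bnd t a4 2%N tp t1.
  rewrite expr1 in b2; lra.
have A1n : 0 <= - a1.
  apply: (small_ge0 t00 B0) => t tp tt0.
  have [_ ha] := hp t tp tt0.
  move: ha; rewrite pmulr_rge0 // => hb.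
  have t1 : t <= 1 by lra.
  have [b2 _] := bnd t a2 0%N tp t1.
  have [_ b3] := bnd t a3 1%N tp t1.
  have [b4 _] := bnd t a4 2%N tp t1.
  rewrite expr1 in b2; lra.
split; first lra.
apply: (small_ge0 t00 n4) => t tp tt0.
have [ha hb] := hp t tp tt0.
have hc : 0 <= t * (2 * t * (a2 + t^+2 * a4)).
  have := addr_ge0 ha hb; move/le_trans; apply; apply: le_eq; ring.
move: hc; rewrite pmulr_rge0 // pmulr_rge0 ?mulr_gt0 // => hc.
have t1 : t <= 1 by lra.
have [b4 _] := bnd t a4 1%N tp t1.
lra.
Qed.
End Poly.

Set Implicit Arguments. Unset Strict Implicit.

Section Obj.
Variables (R : realType) (d : nat).
Implicit Types (S : {set 'I_d * 'I_d}) (z x v : 'I_d -> R).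

Definition Fo S z x : R :=
  2^-1 * \sum_i \sum_j om R S i j * (z i * z j - x i * x j)^+2.

Lemma fobj_Fo S (z x : 'cV[R]_d) :
  fobj (omega_of S) (z *m z^T) x = Fo S (fun i => z i 0) (fun i => x i 0).
Proof.
rewrite /fobj /normF /Fo sqr_sqrtr; last first.
  by apply: sumr_ge0 => i _; apply: sumr_ge0 => j _; exact: sqr_ge0.
congr (_ * _); apply: eq_bigr => i _; apply: eq_bigr => j _.
rewrite !mxE /om big_ord1 !mxE.
rewrite big_ord1 !mxE.
by case: ((i, j) \in omega_of S); rewrite ?mul1r ?mul0r ?expr0n.
Qed.

Definition A1 S z x v : R := \sum_i \sum_j om R S i j *
  (- ((z i * z j - x i * x j) * (x i * v j + v i * x j))).
Definition A2 S z x v : R := \sum_i \sum_j om R S i j *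
  (2^-1 * ((x i * v j + v i * x j)^+2 - 2 * (z i * z j - x i * x j) * (v i * v j))).
Definition A3 S z x v : R := \sum_i \sum_j om R S i j *
  ((x i * v j + v i * x j) * (v i * v j)).
Definition A4 S z x v : R := \sum_i \sum_j om R S i j *
  (2^-1 * (v i * v j)^+2).

Lemma Fo_expand S z x v t :
  Fo S z (fun i => x i + t * v i) =
  Fo S z x + t * A1 S z x v + t^+2 * A2 S z x v + t^+3 * A3 S z x v + t^+4 * A4 S z x v.
Proof.
rewrite /Fo /A1 /A2 /A3 /A4 !mulr_sumr -!big_split /=.
apply: eq_bigr => i _; rewrite !mulr_sumr -!big_split /=.
apply: eq_bigr => j _; by field.
Qed.

Lemma norm2Z (t : R) (v : 'cV[R]_d) : norm2 (t *: v) = `|t| * norm2 v.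
Proof.
rewrite /norm2 -sqrtr_sqr -sqrtrM ?sqr_ge0 //; congr Num.sqrt.
rewrite mulr_sumr; apply: eq_bigr => i _; rewrite !mxE; ring.
Qed.

Lemma lm_cond S (z x v : 'cV[R]_d) :
  local_min (fobj (omega_of S) (z *m z^T)) x ->
  A1 S (fun i => z i 0) (fun i => x i 0) (fun i => v i 0) = 0 /\
  0 <= A2 S (fun i => z i 0) (fun i => x i 0) (fun i => v i 0).
Proof.
case=> r [r0 hr].
have n0 : 0 <= norm2 v by rewrite /norm2 sqrtr_ge0.
apply: (@poly4 R _ _ (A3 S (fun i => z i 0) (fun i => x i 0) (fun i => v i 0))
   (A4 S (fun i => z i 0) (fun i => x i 0) (fun i => v i 0)) (r / (norm2 v + 1))).
  by rewrite divr_gt0 //; lra.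
move=> t ht.
have := hr (x + t *: v).
rewrite (addrC x) addrK norm2Z.
have hlt : `|t| * norm2 v < r.
  move: ht; rewrite ltr_pdivlMr; last lra.
  have := normr_ge0 t; nra.
move=> /(_ hlt); rewrite !fobj_Fo.
rewrite (_ : (fun i => (t *: v + x) i 0) = (fun i => x i 0 + t * v i 0)); last first.
  by apply: funext => i; rewrite !mxE addrC.
rewrite Fo_expand; lra.
Qed.
End Obj.

Set Implicit Arguments. Unset Strict Implicit.

Section Alg.
Variable R : realType.

Lemma alg_pos (a b e : R) : 0 <= a -> 0 <= b -> 0 <= e -> e <= 1/100 ->
  `|a^+2 - b^+2| <= 2 * e -> b * `|1 - a| <= 2 * e -> 1 - 4 * e <= a + 2 * b^+2 ->
  a + 1 - 2 * b <= 40 * e.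
Proof.
move=> a0 b0 e0 e1 h1 h2 h3.
move: h1; rewrite ler_norml => /andP [h1a h1b].
have hb : 1/3 <= b.
  rewrite leNgt; apply/negP => hb.
  have hb2 : b^+2 <= 1/9 by rewrite expr2; nra.
  have ha : 1/2 <= a by lra.
  have : 1/4 <= a^+2 by rewrite expr2; nra.
  lra.
have h4 : `|1 - a| <= 6 * e.
  have : (1/3) * `|1 - a| <= b * `|1 - a| by rewrite ler_wpM2r.
  lra.
move: h4; rewrite ler_norml => /andP [h4a h4b].
have h5 : 1 - 14 * e <= b^+2.
  have : (1 - 6 * e)^+2 <= a^+2.
    rewrite !expr2; apply: ler_pM; lra.
  nra.
have h6 : 1 - 14 * e <= b.
  case: (lerP 1 b) => hb1; first lra.
  have : b^+2 <= b by rewrite expr2; nra.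
  lra.
lra.
Qed.

Lemma alg_main (a b e : R) : 0 <= a -> 0 <= e -> e <= 1/100 ->
  `|a^+2 - b^+2| <= 2 * e -> `|b - a * b| <= 2 * e -> 1 - 4 * e <= a + 2 * b^+2 ->
  a + 1 - 2 * `|b| <= 40 * e.
Proof.
move=> a0 e0 e1 h1 h2 h3.
apply: alg_pos => //.
- by rewrite real_normK ?num_real.
- by move: h2; rewrite -{1}(mul1r b) -mulrBl normrM mulrC.
- by rewrite real_normK ?num_real.
Qed.
End Alg.

Set Implicit Arguments. Unset Strict Implicit.

Section Det.
Variables (R : realType) (d : nat).
Implicit Types (S : {set 'I_d * 'I_d}) (u w z x : 'I_d -> R).

Definition Q S u w : R := \sum_i \sum_j om R S i j * (u i * w j).

Lemma Q_approx S (p L m : R) u w :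
  (forall s t : {ffun 'I_d -> bool}, `|Xst p S s t| <= L) -> 0 <= m ->
  (forall i, `|u i| <= m) -> (forall j, `|w j| <= m) ->
  `|Q S u w - p * (\sum_i u i) * (\sum_j w j)| <= L * m * m.
Proof.
move=> hX m0 hu hw.
have -> : Q S u w - p * (\sum_i u i) * (\sum_j w j) =
  \sum_i \sum_j (om R S i j - p) * (u i * w j).
  have e : p * (\sum_i u i) * (\sum_j w j) = \sum_i \sum_j p * (u i * w j).
    rewrite -mulrA mulr_suml mulr_sumr; apply: eq_bigr => i _.
    rewrite mulr_sumr mulr_sumr; apply: eq_bigr => j _; ring.
  rewrite e /Q -sumrB; apply: eq_bigr => i _.
  rewrite -sumrB; apply: eq_bigr => j _; ring.
exact: bilin.
Qed.

Definition pw u w : 'I_d -> R := fun i => u i * w i.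

Lemma I1 S z x : A1 S z x x = 2 * Q S (pw x x) (pw x x) - 2 * Q S (pw x z) (pw x z).
Proof.
rewrite /A1 /Q /pw !mulr_sumr -sumrB; apply: eq_bigr => i _.
rewrite !mulr_sumr -sumrB; apply: eq_bigr => j _; ring.
Qed.

Lemma I2 S z x : A1 S z x z = Q S (pw x x) (pw x z) + Q S (pw x z) (pw x x)
   - Q S (pw x z) (pw z z) - Q S (pw z z) (pw x z).
Proof.
rewrite /A1 /Q /pw -big_split /= -!sumrB; apply: eq_bigr => i _.
rewrite -big_split /= -!sumrB; apply: eq_bigr => j _; ring.
Qed.

Lemma I3 S z x : A2 S z x z = 2^-1 * (Q S (pw x x) (pw z z) + Q S (pw z z) (pw x x)
   + 4 * Q S (pw x z) (pw x z) - 2 * Q S (pw z z) (pw z z)).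
Proof.
rewrite /A2 /Q /pw (mulr_sumr _ _ _ 4) (mulr_sumr _ _ _ 2) -!big_split /= -sumrB mulr_sumr.
apply: eq_bigr => i _.
rewrite !mulr_sumr -!big_split /= -sumrB mulr_sumr; apply: eq_bigr => j _; by field.
Qed.
End Det.

Set Implicit Arguments. Unset Strict Implicit.

Section Det2.
Variables (R : realType) (d : nat).

Lemma normInf_ge (x : 'cV[R]_d) i : `|x i 0| <= normInf x.
Proof. rewrite /normInf; exact: (Order.TotalTheory.le_bigmax 0 (fun i => `|x i 0|) i). Qed.

Lemma norm2_sq (v : 'cV[R]_d) : norm2 v ^+ 2 = \sum_i v i 0 * v i 0.
Proof.
rewrite /norm2 sqr_sqrtr; last by apply: sumr_ge0 => i _; exact: sqr_ge0.
by apply: eq_bigr => i _; rewrite expr2.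
Qed.

Lemma norm2_ge0 (v : 'cV[R]_d) : 0 <= norm2 v.
Proof. exact: sqrtr_ge0. Qed.

Lemma norm2_le (v : 'cV[R]_d) (e : R) : 0 <= e -> norm2 v ^+ 2 <= e -> norm2 v <= Num.sqrt e.
Proof.
move=> e0 h; rewrite -[norm2 v](ger0_norm (norm2_ge0 v)) -sqrtr_sqr.
by rewrite ler_sqrt.
Qed.

Lemma prod_bound (a b ca cb : R) : `|a| <= ca -> `|b| <= cb -> `|a * b| <= ca * cb.
Proof.
move=> ha hb; rewrite normrM; apply: ler_pM => //; exact: normr_ge0.
Qed.


Lemma det_main (S : {set 'I_d * 'I_d}) (p q mu eps : R) (z x : 'cV[R]_d) :
  (0 < d)%N -> 0 < q -> q ^+ 2 = p * d%:R -> (256 * 40) * mu ^+ 4 <= q * eps ->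
  0 < eps -> eps <= 1/4 ->
  (forall s t : {ffun 'I_d -> bool}, `|Xst p S s t| <= 16 * d%:R * q) ->
  norm2 z = 1 -> normInf z <= mu / Num.sqrt d%:R ->
  local_min (fobj (omega_of S) (z *m z^T)) x -> normInf x < 2 * mu / Num.sqrt d%:R ->
  Num.min (norm2 (x - z)) (norm2 (x + z)) <= 1 * Num.sqrt eps.
Proof.
move=> d0 q0 hq hmu e0 e1 hX hz hzi hlm hxi.
pose xf := fun i => x i 0; pose zf := fun i => z i 0.
have dpos : 0 < (d%:R : R) by rewrite ltr0n.
have sd : 0 < Num.sqrt (d%:R : R) by rewrite sqrtr_gt0.
have sd2 : Num.sqrt (d%:R : R) ^+ 2 = d%:R by rewrite sqr_sqrtr // ltW.
have p0 : 0 < p.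
  have : 0 < p * d%:R by rewrite -hq exprn_gt0.
  by rewrite pmulr_lgt0.
pose c := 2 * mu / Num.sqrt d%:R.
pose m := c ^+ 2.
have hxb : forall i, `|xf i| <= c.
  by move=> i; apply: ltW; apply: le_lt_trans (normInf_ge x i) (hxi).
have hzb : forall i, `|zf i| <= c.
  move=> i; rewrite /zf; apply: le_trans (normInf_ge z i) _; apply: le_trans (hzi) _.
  have w0 : 0 <= mu / Num.sqrt d%:R.
    exact: le_trans (normr_ge0 (z i 0)) (le_trans (normInf_ge z i) hzi).
  have ec : c = 2 * (mu / Num.sqrt d%:R) by rewrite /c mulrA.
  rewrite ec; lra.
have m0 : 0 <= m by exact: sqr_ge0.
have bxx : forall i, `|pw xf xf i| <= m by move=> i; rewrite /m expr2; apply: prod_bound.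
have bxz : forall i, `|pw xf zf i| <= m by move=> i; rewrite /m expr2; apply: prod_bound.
have bzz : forall i, `|pw zf zf i| <= m by move=> i; rewrite /m expr2; apply: prod_bound.
pose E := 16 * d%:R * q * m * m.
pose e := eps / 40.
have hE : E <= p * e.
  have pe : p = q ^+ 2 / d%:R by rewrite hq mulfK // gt_eqF.
  have ee : p * e - E = (q / (40 * d%:R)) * (q * eps - (256 * 40) * mu ^+ 4).
    rewrite /E /m /c pe /e; move: sd sd2; set s := Num.sqrt _ => sd sd2.
    rewrite -sd2; field.
    by rewrite gt_eqF.
  have : 0 <= p * e - E.
    rewrite ee; apply: mulr_ge0; last by rewrite subr_ge0.
    by apply: divr_ge0; [exact: ltW | lra].
  lra.
pose a := \sum_i pw xf xf i.
pose b := \sum_i pw xf zf i.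
have hz1 : \sum_i pw zf zf i = 1.
  by rewrite -(norm2_sq z) hz expr1n.
have a0 : 0 <= a by apply: sumr_ge0 => i _; rewrite /pw -expr2 sqr_ge0.
have Qb : forall u w, (forall i, `|u i| <= m) -> (forall j, `|w j| <= m) ->
    p * (\sum_i u i) * (\sum_j w j) - E <= Q S u w /\ Q S u w <= p * (\sum_i u i) * (\sum_j w j) + E.
  move=> u w hu hw; have := Q_approx hX m0 hu hw.
  rewrite ler_norml => /andP [h1 h2]; split; rewrite /E; lra.
have [q1 q2] := Qb _ _ bxx bxx.
have [q3 q4] := Qb _ _ bxz bxz.
have [q5 q6] := Qb _ _ bxx bxz.
have [q7 q8] := Qb _ _ bxz bxx.
have [q9 q10] := Qb _ _ bxz bzz.
have [q11 q12] := Qb _ _ bzz bxz.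
have [q13 q14] := Qb _ _ bxx bzz.
have [q15 q16] := Qb _ _ bzz bxx.
have [q17 q18] := Qb _ _ bzz bzz.
rewrite -/a -/b hz1 in q1 q2 q3 q4 q5 q6 q7 q8 q9 q10 q11 q12 q13 q14 q15 q16 q17 q18.
have [A1x _] := @lm_cond R d S z x x hlm.
have [A1z A2z] := @lm_cond R d S z x z hlm.
rewrite -/xf -/zf in A1x A1z A2z.
rewrite I1 in A1x; rewrite I2 in A1z; rewrite I3 in A2z.
have pe0 : 0 <= p * e by rewrite mulr_ge0 ?ltW // divr_gt0.
have h1 : `|a ^+ 2 - b ^+ 2| <= 2 * e.
  rewrite ler_norml; apply/andP; split.
    rewrite -(ler_pM2l p0); have : p * (- (2 * e)) <= p * (a ^+ 2 - b ^+ 2) by rewrite !expr2; lra.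
    done.
  rewrite -(ler_pM2l p0); rewrite !expr2; lra.
have h2 : `|b - a * b| <= 2 * e.
  rewrite ler_norml; apply/andP; split.
    rewrite -(ler_pM2l p0); lra.
  rewrite -(ler_pM2l p0); lra.
have h3 : 1 - 4 * e <= a + 2 * b ^+ 2.
  have A2z' : 0 <= Q S (pw xf xf) (pw zf zf) + Q S (pw zf zf) (pw xf xf) +
      4 * Q S (pw xf zf) (pw xf zf) - 2 * Q S (pw zf zf) (pw zf zf).
    by move: A2z; rewrite pmulr_rge0 // invr_gt0.
  rewrite -(ler_pM2l p0) expr2; lra.
have e100 : e <= 1/100 by rewrite /e; lra.
have hmain := alg_main a0 (ltW (divr_gt0 e0 _)) e100 h1 h2 h3.
have hmain' : a + 1 - 2 * `|b| <= eps by move: hmain; rewrite /e; lra.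
have nxz : norm2 (x - z) ^+ 2 = a - 2 * b + 1.
  rewrite norm2_sq.
  suff -> : \sum_i (x - z) i 0 * (x - z) i 0 = a - 2 * b + \sum_i pw zf zf i by rewrite hz1.
  rewrite /a /b.
  have -> : 2 * \sum_i pw xf zf i = \sum_i 2 * pw xf zf i by rewrite mulr_sumr.
  rewrite -sumrB -big_split /=; apply: eq_bigr => i _.
  rewrite !mxE /pw /xf /zf; ring.
have nxz' : norm2 (x + z) ^+ 2 = a + 2 * b + 1.
  rewrite norm2_sq.
  suff -> : \sum_i (x + z) i 0 * (x + z) i 0 = a + 2 * b + \sum_i pw zf zf i by rewrite hz1.
  rewrite /a /b.
  have -> : 2 * \sum_i pw xf zf i = \sum_i 2 * pw xf zf i by rewrite mulr_sumr.
  rewrite -!big_split /=; apply: eq_bigr => i _.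
  rewrite !mxE /pw /xf /zf; ring.
rewrite mul1r ge_min; apply/orP.
case: (lerP 0 b) => hb.
  left; apply: norm2_le; first lra.
  rewrite nxz; move: hmain'; rewrite ger0_norm //; lra.
right; apply: norm2_le; first lra.
rewrite nxz'; move: hmain'; rewrite ltr0_norm //; lra.
Qed.
End Det2.

Unset Implicit Arguments. Set Strict Implicit.

Lemma four_exp (R : realType) : 4 * expR (- 8 : R) <= 1/2.
Proof.
have h8 : 9 <= expR (8 : R).
  have := expR_ge1Dx (8 : R); lra.
have e8 : 0 < expR (8 : R) := expR_gt0 _.
rewrite expRN.
have hi : (expR (8:R))^-1 <= 9^-1 by rewrite lef_pV2 ?posrE //; lra.
lra.
Qed.

Lemma tail_small (R : realType) (d : nat) (eta : R) : 0 < eta ->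
  ((Num.Def.trunc (2 / eta)).+1 <= d)%N ->
  2 * (2 ^ d * 2 ^ d)%:R * expR (- (8 * d%:R)) <= eta.
Proof.
move=> eta0 hd.
have hq := four_exp R.
have ex : expR (- (8 * d%:R)) = expR (- 8 : R) ^+ d.
  have -> : - (8 * d%:R) = d%:R * (- 8) :> R by ring.
  by rewrite expRM_natl.
have en : ((2 ^ d * 2 ^ d)%:R : R) = 4 ^+ d.
  rewrite natrM natrX -exprMn (_ : (2%:R * 2%:R : R) = 4) //; ring.
rewrite ex en -mulrA -exprMn.
have hpow : (4 * expR (- 8 : R)) ^+ d <= (1/2) ^+ d.
  by rewrite lerXn2r ?nnegrE ?mulr_ge0 ?expR_ge0 //; lra.
have h2 : (1/2 : R) ^+ d = (2 ^ d)%:R^-1 by rewrite natrX -exprVn div1r.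
have hd2 : (d.+1 <= 2 ^ d)%N by apply: ltn_expl.
have ht := truncnS_gt (2 / eta).
have hD : (2 / eta) < d%:R.
  apply: lt_le_trans ht _; rewrite ler_nat //.
have hD2 : (d.+1%:R : R) <= (2 ^ d)%:R by rewrite ler_nat.
have : 2 * (2 ^ d)%:R^-1 <= eta.
  have p2 : (0 : R) < (2 ^ d)%:R by rewrite ltr0n expn_gt0.
  rewrite ler_pdivrMr //.
  move: hD; rewrite ltr_pdivrMr // => hD.
  have : d%:R * eta <= (2 ^ d)%:R * eta.
    apply: ler_wpM2r; [exact: ltW | rewrite ler_nat; exact: leq_trans (leqnSn d) hd2].
  lra.
rewrite -h2 => h; apply: le_trans h.
by rewrite ler_wpM2l.
Qed.

Unset Implicit Arguments. Set Strict Implicit.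

Theorem theorem4p2 (R : realType) :
  exists (P : {poly {poly R}}) (c0 C : R), 0 < c0 /\ 0 < C /\
  forall eta : R, 0 < eta -> exists D : nat, forall d : nat, (D <= d)%N ->
  forall (mu : R) (z : 'cV[R]_d) (eps p : R),
    norm2 z = 1 -> normInf z <= mu / Num.sqrt d%:R ->
    0 < eps -> eps <= c0 -> 0 <= p -> p <= 1 ->
    peval2 P mu (ln d%:R) / (d%:R * eps ^+ 2) <= p ->
    1 - eta <= prob p (fun S =>
      forall x : 'cV[R]_d,
        local_min (fobj (omega_of S) (z *m z^T)) x ->
        normInf x < 2 * mu / Num.sqrt d%:R ->
        Num.min (norm2 (x - z)) (norm2 (x + z)) <= C * Num.sqrt eps).
Proof.
pose K : R := (256 * 40) ^+ 2.
exists ((K *: 'X^8 + 16%:P)%:P), (1/4), 1.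
split; first lra. split; first lra.
move=> eta eta0.
exists (Num.Def.trunc (2 / eta)).+1 => d hd mu z eps p hz hzi e0 e1 p0 p1 hP.
have d0 : (0 < d)%N by apply: leq_trans hd.
have hpe : peval2 ((K *: 'X^8 + 16%:P)%:P) mu (ln d%:R) = K * mu ^+ 8 + 16.
  by rewrite /peval2 hornerC !hornerE.
rewrite hpe in hP.
have dpos : (0 : R) < d%:R by rewrite ltr0n.
have ee : 0 < eps ^+ 2 by rewrite exprn_gt0.
have de : 0 < d%:R * eps ^+ 2 by rewrite mulr_gt0.
have hP' : K * mu ^+ 8 + 16 <= p * (d%:R * eps ^+ 2) by rewrite -ler_pdivrMr.
have pd0 : 0 <= p * d%:R by rewrite mulr_ge0 // ltW.
pose q := Num.sqrt (p * d%:R).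
have hq : q ^+ 2 = p * d%:R by rewrite sqr_sqrtr.
have q0' : 0 <= q by exact: sqrtr_ge0.
have K0 : 0 <= K * mu ^+ 8.
  have -> : mu ^+ 8 = (mu ^+ 4) ^+ 2 by rewrite -exprM.
  by rewrite mulr_ge0 // sqr_ge0.
have e21 : eps ^+ 2 <= 1.
  rewrite expr2; have : eps <= 1 by lra.
  move=> h; have := ler_pM (ltW e0) (ltW e0) h h; rewrite mulr1; exact.
have hpq : p * d%:R * eps ^+ 2 <= p * d%:R by rewrite -{2}[p * d%:R]mulr1 ler_wpM2l.
have q16 : 16 <= q ^+ 2 by rewrite hq; move: hP'; rewrite mulrA; lra.
have q4 : 4 <= q.
  rewrite leNgt; apply/negP => h.
  have : q ^+ 2 < 4 ^+ 2 by rewrite ltrXn2r // ?nnegrE //; lra.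
  lra.
have q0 : 0 < q by lra.
have key : forall a b : R, 0 <= b -> a ^+ 2 <= b ^+ 2 -> a <= b.
  move=> a b b0 h; rewrite leNgt; apply/negP => hab.
  have : b * b < a * a by nra.
  rewrite -!expr2; lra.
have hmu : (256 * 40) * mu ^+ 4 <= q * eps.
  apply: key; first by rewrite mulr_ge0 // ltW.
  have -> : ((256 * 40) * mu ^+ 4) ^+ 2 = K * mu ^+ 8 by rewrite exprMn -exprM.
  rewrite exprMn hq; move: hP'; rewrite mulrA; lra.
apply: le_trans (_ : 1 - 2 * (2 ^ d * 2 ^ d)%:R * expR (- (8 * d%:R)) <= _).
  have := @tail_small R d eta eta0 hd; lra.
apply: le_trans (union_bound p0 p1 q4 hq) _.
rewrite /prob; apply: ler_sum => S SU.
apply: ler_wpM2l; first exact: weight_ge0.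
case g: (goodb p q S); last by case: asboolP.
rewrite asboolT //= => x hlm hxi.
apply: (det_main d0 q0 hq hmu e0 e1 _ hz hzi hlm hxi).
move=> s t; move/forallP: g => /(_ (s, t)); exact.
Qed.
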